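(* If $f\in\mathcal S(X)$ is skew invertible (as an element of $\mathcal F(X)$), then its skew inverse $f^{\langle-1\rangle}$ belongs to $\mathcal S(X)$.
   Context: Let $K$ be a skew field, $K^*=K\setminus\{0\}$, and $X$ a nonempty set with a left $K^*$-action $(a,x)\mapsto{}^{a}x$. $\mathcal F(X)$ is the set of functions $X\to K$ with pointwise addition; the constant function with value $a\in K$ is denoted $a$. The skew product is $(f\diamond g)(x)=f({}^{g(x)}x)\,g(x)$ if $g(x)\neq0$ and $0$ if $g(x)=0$. A function $f$ is skew convex if $f\diamond(a+b)=f\diamond a+f\diamond b$ for all $a,b\in K$; $\mathcal S(X)$ is the set of skew-convex functions. $f\in\mathcal F(X)$ is skew invertible if there is $g\in\mathcal F(X)$ with $f\diamond g=g\diamond f=1$; then $g$ is called the skew inverse $f^{\langle-1\rangle}$. *)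

(* Defs.v *)
From mathcomp Require Import all_boot all_algebra.
Set Implicit Arguments. Unset Strict Implicit. Unset Printing Implicit Defensive.
Import GRing.Theory.
Local Open Scope ring_scope.

Definition skew_field (K : unitRingType) : Prop :=
  forall a : K, a != 0 -> a \is a GRing.unit.

(* A left action of K^* = K \ {0} on X, given by act : K -> X -> X; its
   values at a = 0 are irrelevant and unconstrained. *)
Definition left_action_units (K : unitRingType) (X : Type) (act : K -> X -> X) : Prop :=
  (forall x, act 1 x = x) /\
  (forall a b x, a != 0 -> b != 0 -> act a (act b x) = act (a * b) x).

Definition skew_prod (K : unitRingType) (X : Type) (act : K -> X -> X)
  (f g : X -> K) : X -> K :=
  fun x => if g x == 0 then 0 else f (act (g x) x) * g x.

Definition skew_convex (K : unitRingType) (X : Type) (act : K -> X -> X)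
  (f : X -> K) : Prop :=
  forall a b : K,
    skew_prod act f (fun _ => a + b) =
    (fun x => skew_prod act f (fun _ => a) x + skew_prod act f (fun _ => b) x).

Definition skew_inverse (K : unitRingType) (X : Type) (act : K -> X -> X)
  (f g : X -> K) : Prop :=
  skew_prod act f g = (fun _ => 1) /\ skew_prod act g f = (fun _ => 1).

(* Main.v *)
Require Import Defs.
From mathcomp Require Import all_boot all_algebra.
From Stdlib Require Import FunctionalExtensionality.
Import GRing.Theory.
Local Open Scope ring_scope.

Theorem lemma2p8 (K : unitRingType) (X : Type) (act : K -> X -> X)
  (HK : skew_field K) (HX : inhabited X) (Hact : left_action_units act)
  (f g : X -> K) :
  skew_convex act f -> skew_inverse act f g -> skew_convex act g.
Proof.
move=> Hf [Hfg Hgf].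
have gnz : forall y, g y != 0.
  move=> y; apply/negP=> /eqP e.
  have := congr1 (fun h => h y) Hfg; rewrite /skew_prod /= e eqxx => /eqP.
  by rewrite eq_sym oner_eq0.
have fnz : forall y, f y != 0.
  move=> y; apply/negP=> /eqP e.
  have := congr1 (fun h => h y) Hgf; rewrite /skew_prod /= e eqxx => /eqP.
  by rewrite eq_sym oner_eq0.
move=> a b; apply: functional_extensionality => x.
pose phi c := skew_prod act f (fun _ => c) x.
pose psi c := skew_prod act g (fun _ => c) x.
have phiD : forall u v, phi (u + v) = phi u + phi v.
  by move=> u v; rewrite /phi (Hf u v).
have phi0 : phi 0 = 0 by rewrite /phi /skew_prod eqxx.
have phiN : forall u v, phi (u - v) = phi u - phi v.
  move=> u v; apply/eqP; rewrite eq_sym subr_eq -phiD.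
  by rewrite subrK.
have phi_inj0 : forall c, phi c = 0 -> c = 0.
  move=> c; rewrite /phi /skew_prod /=; case: eqP => // _ /eqP.
  case: (eqVneq c 0) => // cnz.
  move=> H; exfalso.
  have u := HK _ (fnz (act c x)).
  move: H => /eqP H; have := congr1 (fun t => (f (act c x))^-1 * t) H.
  by rewrite /= mulr0 mulKr //; apply/eqP.
have phiK : forall c, phi (psi c) = c.
  move=> c; rewrite /phi /psi /skew_prod /=.
  case: (eqVneq c 0) => [->|cnz]; first by rewrite eqxx.
  have d0 : g (act c x) * c != 0.
    apply/negP=> /eqP H.
    have u := HK _ (gnz (act c x)).
    have := congr1 (fun t => (g (act c x))^-1 * t) H.
    by rewrite /= mulr0 mulKr //; apply/eqP.
  rewrite (negbTE d0) -(proj2 Hact) //.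
  have := congr1 (fun h => h (act c x)) Hfg; rewrite /skew_prod /=.
  by rewrite (negbTE (gnz _)) mulrA => ->; rewrite mul1r.
have psiE : forall c, skew_prod act g (fun _ => c) x = psi c by [].
rewrite !psiE.
apply/eqP; rewrite -subr_eq0; apply/eqP; apply: phi_inj0.
by rewrite !phiN phiD !phiK subrr.
Qed.
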